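(* Let $\mathcal G$ encode a fine mixed subdivision of $n\Delta^{d-1}$ with $n\ge2$, let $t$ be a lattice point of $(n-2)\Delta^{d-1}$, and suppose $\bar j_0,\bar j_1,\dots,\bar j_\ell$ ($\ell\ge1$) is a path in $\mathbb G(t)$ where, for $0\le k\le\ell-1$, the edge between $\bar j_k$ and $\bar j_{k+1}$ has near label $i_k$ at $\bar j_k$ and near label $i'_{k+1}$ at $\bar j_{k+1}$. Then: (a) for each $0\le k\le\ell-1$, in the graph $\mathbb T(t+e_{\bar j_k})\setminus(i_k,\bar j_k)$ the vertices $\bar j_0,\dots,\bar j_k$ lie in a different connected component from the vertices $\bar j_{k+1},\dots,\bar j_\ell$; (b) for all $1\le k\le k'\le\ell-1$, $i'_k\neq i_{k'}$; (c) if $(i,\bar j_k)\in T_t$ for some $0\le k\le\ell$, then $i_{k'}\neq i$ for all $k\le k'\le\ell-1$ and $i'_{k'}\neq i$ for all $1\le k'\le k$.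
   Context: Fix positive integers $n,d$; $K_{n,d}$ is the complete bipartite graph with left vertices $[n]$ and right vertices $[\bar d]=\{\bar1,\dots,\bar d\}$; graphs are identified with edge sets; $RD$ denotes the vector of right-vertex degrees, $\mathbf 1$ the all-ones vector in $\mathbb Z^{[\bar d]}$, $e_{\bar j}$ a unit vector; lattice points of $k\Delta^{d-1}$ are vectors in $\mathbb Z_{\ge0}^{[\bar d]}$ with sum $k$. Two acyclic subgraphs are compatible if whenever both contain a perfect matching between the same $I\subseteq[n]$, $\bar J\subseteq[\bar d]$, these matchings coincide. A collection $\mathcal G$ of subgraphs of $K_{n,d}$ encodes a fine mixed subdivision of $n\Delta^{d-1}$ if: every $G\in\mathcal G$ is a spanning tree of $K_{n,d}$; (tree linkage) for each $G\in\mathcal G$ and each edge $e\in G$ not incident to a leaf, there are $G'\in\mathcal G$, $G'\neq G$, and $e'\in G'$ with $G\setminus e=G'\setminus e'$; (compatibility) any two trees of $\mathcal G$ are compatible. It is known that then for each lattice point $u$ of $(n-1)\Delta^{d-1}$ there is exactly one tree $\mathbb T(u)\in\mathcal G$ with $RD(\mathbb T(u))=u+\mathbf 1$, and these are all the trees of $\mathcal G$. For a lattice point $t$ of $(n-2)\Delta^{d-1}$, the tree-linkage graph $\mathbb G(t)$ is the graph on vertex set $[\bar d]$ in which $\bar j\neq\bar j'$ are adjacent iff $\mathbb T(t+e_{\bar j})\setminus\mathbb T(t+e_{\bar j'})=\{(i,\bar j)\}$ and $\mathbb T(t+e_{\bar j'})\setminus\mathbb T(t+e_{\bar j})=\{(i',\bar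 j')\}$ for some $i,i'\in[n]$; this edge carries the near label $i$ at its endpoint $\bar j$ and the near label $i'$ at its endpoint $\bar j'$. Let $T_t=\bigcap_{\bar j\in[\bar d]}\mathbb T(t+e_{\bar j})$. *)

(* Defs.v *)
From mathcomp Require Import all_boot.
Set Implicit Arguments. Unset Strict Implicit. Unset Printing Implicit Defensive.

(* Edges of K_{n,d}: pairs (i, jbar) with i : 'I_n (left), jbar : 'I_d (right).
   A subgraph is identified with its edge set. *)
Definition edge (n d : nat) := ('I_n * 'I_d)%type.
Definition vtx (n d : nat) := ('I_n + 'I_d)%type.

Definition adj n d (G : {set edge n d}) : rel (vtx n d) :=
  fun u v => match u, v with
             | inl i, inr j => (i, j) \in G
             | inr j, inl i => (i, j) \in G
             | _, _ => false
             end.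

Definition deg n d (G : {set edge n d}) (v : vtx n d) : nat :=
  match v with
  | inl i => #|[set e in G | e.1 == i]|
  | inr j => #|[set e in G | e.2 == j]|
  end.

Definition connectedG n d (G : {set edge n d}) : Prop :=
  forall u v : vtx n d, connect (adj G) u v.

Definition acyclicG n d (G : {set edge n d}) : Prop :=
  forall c : seq (vtx n d), uniq c -> 2 < size c -> ~~ cycle (adj G) c.

Definition spanning_tree n d (G : {set edge n d}) : Prop :=
  connectedG G /\ acyclicG G.

Definition is_pm n d (M : {set edge n d}) (I : {set 'I_n}) (J : {set 'I_d}) : Prop :=
  (forall e, e \in M -> e.1 \in I /\ e.2 \in J) /\
  (forall i, i \in I -> #|[set e in M | e.1 == i]| = 1) /\
  (forall j, j \in J -> #|[set e in M | e.2 == j]| = 1).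

Definition compatible n d (G1 G2 : {set edge n d}) : Prop :=
  forall (I : {set 'I_n}) (J : {set 'I_d}) (M1 M2 : {set edge n d}),
    M1 \subset G1 -> M2 \subset G2 -> is_pm M1 I J -> is_pm M2 I J -> M1 = M2.

Definition incident_to_leaf n d (G : {set edge n d}) (e : edge n d) : Prop :=
  deg G (inl e.1) = 1 \/ deg G (inr e.2) = 1.

Definition encodes_fine_mixed_subdivision n d (GG : {set {set edge n d}}) : Prop :=
  (forall G, G \in GG -> spanning_tree G) /\
  (forall G e, G \in GG -> e \in G -> ~ incident_to_leaf G e ->
     exists G', exists e', [/\ G' \in GG, G' != G, e' \in G' & G :\ e = G' :\ e']) /\
  (forall G1 G2, G1 \in GG -> G2 \in GG -> compatible G1 G2).

Definition RD n d (G : {set edge n d}) : {ffun 'I_d -> nat} :=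
  [ffun j => #|[set e in G | e.2 == j]|].

(* lattice points of k Delta^{d-1} *)
Definition lattice_pt d (k : nat) (u : {ffun 'I_d -> nat}) : Prop :=
  \sum_(j : 'I_d) u j = k.

Definition all_ones d : {ffun 'I_d -> nat} := [ffun _ => 1].
Definition addv d (u v : {ffun 'I_d -> nat}) : {ffun 'I_d -> nat} := [ffun j => u j + v j].
Definition unitv d (j : 'I_d) : {ffun 'I_d -> nat} := [ffun k => (k == j : nat)].

(* tree-linkage edge of G(t) between jb and jb' with near label i at jb and i' at jb' *)
Definition linkage_edge n d (T : {ffun 'I_d -> nat} -> {set edge n d})
    (t : {ffun 'I_d -> nat}) (jb jb' : 'I_d) (i i' : 'I_n) : Prop :=
  [/\ jb != jb',
      T (addv t (unitv jb)) :\: T (addv t (unitv jb')) = [set (i, jb)] &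
      T (addv t (unitv jb')) :\: T (addv t (unitv jb)) = [set (i', jb')]].

Definition Tt n d (T : {ffun 'I_d -> nat} -> {set edge n d}) (t : {ffun 'I_d -> nat})
  : {set edge n d} := \bigcap_(j : 'I_d) T (addv t (unitv j)).

(* Main.v *)
Require Import Defs.
From mathcomp Require Import all_boot zify.
Set Implicit Arguments. Unset Strict Implicit. Unset Printing Implicit Defensive.

Section Graph.
Variables n d : nat.
Implicit Types (G H A B F : {set edge n d}) (u v w : vtx n d).

Lemma adjC G : symmetric (adj G).
Proof. by move=> [a|a] [b|b]. Qed.

Lemma cC G u v : connect (adj G) u v = connect (adj G) v u.
Proof. exact: (sym_connect_sym (adjC G)). Qed.

Lemma cmono G H u v : G \subset H -> connect (adj G) u v -> connect (adj H) u v.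
Proof.
move=> GH; apply: connect_sub => {}u {}v h; apply: connect1.
by case: u v h => [a|a] [b|b] //= h; apply: (subsetP GH).
Qed.

Lemma cedge G (a : 'I_n) (b : 'I_d) : (a, b) \in G -> connect (adj G) (inl a) (inr b).
Proof. by move=> h; apply: connect1. Qed.

Lemma cut H (g : edge n d) u v :
  connect (adj (g |: H)) u v ->
  [\/ connect (adj H) u v,
      connect (adj H) u (inl g.1) /\ connect (adj H) (inr g.2) v |
      connect (adj H) u (inr g.2) /\ connect (adj H) (inl g.1) v].
Proof.
move=> /connectP [p pth ->] {v}.
elim: p u pth => [|z p IH] u /=; first by move=> _; constructor 1.
move=> /andP [auz pz]; have := IH z pz; set w := last z p.
have [huz | [eu ez] | [eu ez]] : [\/ adj H u z, u = inl g.1 /\ z = inr g.2 | u = inr g.2 /\ z = inl g.1].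
  case: u z auz {pz IH w} => [a|a] [b|b] //=; rewrite !inE => /orP [/eqP eg|h];
   try (by constructor 1); subst g; [constructor 2 | constructor 3]; done.
- have c1 := connect1 huz.
  case=> [h|[h1 h2]|[h1 h2]].
  + by constructor 1; apply: connect_trans c1 h.
  + by constructor 2; split => //; apply: connect_trans c1 h1.
  + by constructor 3; split => //; apply: connect_trans c1 h1.
- subst; case=> [h|[h1 h2]|[h1 h2]].
  + by constructor 2; split.
  + by constructor 2; split.
  + by constructor 1.
- subst; case=> [h|[h1 h2]|[h1 h2]].
  + by constructor 3; split.
  + by constructor 1.
  + by constructor 3; split.
Qed.

Lemma tree_sep A (a : 'I_n) (b : 'I_d) : acyclicG A -> (a, b) \in A ->
  ~~ connect (adj (A :\ (a, b))) (inl a) (inr b).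
Proof.
move=> ac abA; apply/negP => /connectP [p0 pth0 lst0].
case: (shortenP pth0) lst0 => p pth un _ lst.
have sub : subrel (adj (A :\ (a, b))) (adj A).
  by move=> [x|x] [y|y] //=; rewrite inE => /andP [].
have sz : 2 < size (inl a :: p).
  case: p pth un lst => [|z [|z2 p]] //= pth _.
  by move=> ez; subst z; move: pth; rewrite /= !inE; case: eqP.
  idtac.
have cy : cycle (adj A) (inl a :: p).
  rewrite /= rcons_path (sub_path sub pth) /= -lst; exact: abA.
by move: (ac _ un sz); rewrite cy.
Qed.

Lemma tree_two A (g : edge n d) w : connectedG A -> g \in A ->
  connect (adj (A :\ g)) w (inl g.1) \/ connect (adj (A :\ g)) w (inr g.2).
Proof.
move=> cA gA; have := cA w (inl g.1); rewrite -{1}(setD1K gA) => /cut.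
case=> [h|[h1 h2]|[h1 h2]]; by [left|left|right].
Qed.

End Graph.

Section PM.
Variables n d : nat.
Implicit Types (G H A B F M : {set edge n d}).

Lemma pm_union M1 M2 (I1 I2 : {set 'I_n}) (J1 J2 : {set 'I_d}) :
  is_pm M1 I1 J1 -> is_pm M2 I2 J2 ->
  (forall v, v \in I1 -> v \in I2 -> False) ->
  (forall v, v \in J1 -> v \in J2 -> False) ->
  is_pm (M1 :|: M2) (I1 :|: I2) (J1 :|: J2).
Proof.
move=> [h1 [c1 d1]] [h2 [c2 d2]] dI dJ; split; [|split].
- move=> e; rewrite inE => /orP [/h1 [p q]|/h2 [p q]]; by rewrite !inE p q ?orbT.
- move=> i; rewrite inE => /orP [iI|iI].
  + rewrite -(c1 i iI); apply: eq_card => e; rewrite !inE.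
    case: (boolP (e \in M2)) => eM2 /=; last by rewrite orbF.
    case: (boolP (e.1 == i)) => [/eqP ei|]; last by rewrite !andbF.
    case: (h2 _ eM2) => e1 _; exfalso; apply: (dI i) => //; by rewrite -ei.
  + rewrite -(c2 i iI); apply: eq_card => e; rewrite !inE.
    case: (boolP (e \in M1)) => eM1 /=; last by [].
    case: (boolP (e.1 == i)) => [/eqP ei|]; last by rewrite !andbF.
    case: (h1 _ eM1) => e1 _; exfalso; apply: (dI i) => //; by rewrite -ei.
- move=> j; rewrite inE => /orP [jJ|jJ].
  + rewrite -(d1 j jJ); apply: eq_card => e; rewrite !inE.
    case: (boolP (e \in M2)) => eM2 /=; last by rewrite orbF.
    case: (boolP (e.2 == j)) => [/eqP ej|]; last by rewrite !andbF.
    case: (h2 _ eM2) => _ e2; exfalso; apply: (dJ j) => //; by rewrite -ej.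
  + rewrite -(d2 j jJ); apply: eq_card => e; rewrite !inE.
    case: (boolP (e \in M1)) => eM1 /=; last by [].
    case: (boolP (e.2 == j)) => [/eqP ej|]; last by rewrite !andbF.
    case: (h1 _ eM1) => _ e2; exfalso; apply: (dJ j) => //; by rewrite -ej.
Qed.

Lemma pm_single (a : 'I_n) (b : 'I_d) : is_pm [set (a, b)] [set a] [set b].
Proof.
split; [|split].
- by move=> e; rewrite inE => /eqP ->; rewrite !inE; split.
- move=> i; rewrite inE => /eqP ->.
  rewrite (_ : [set e in [set (a, b)] | e.1 == a] = [set (a, b)]) ?cards1 //.
  by apply/setP => e; rewrite !inE; case: (e =P (a,b)) => [->|] /=; rewrite ?eqxx.
- move=> j; rewrite inE => /eqP ->.
  rewrite (_ : [set e in [set (a, b)] | e.2 == b] = [set (a, b)]) ?cards1 //.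
  by apply/setP => e; rewrite !inE; case: (e =P (a,b)) => [->|] /=; rewrite ?eqxx.
Qed.

Lemma pm_add M I J (a : 'I_n) (b : 'I_d) : is_pm M I J -> a \notin I -> b \notin J ->
  is_pm ((a, b) |: M) (a |: I) (b |: J).
Proof.
move=> pm aI bJ; apply: pm_union (pm_single a b) pm _ _.
- by move=> v; rewrite inE => /eqP -> h; rewrite h in aI.
- by move=> v; rewrite inE => /eqP -> h; rewrite h in bJ.
Qed.

Lemma pm0 : is_pm (set0 : {set edge n d}) set0 set0.
Proof. by split; [|split]; move=> ?; rewrite inE. Qed.

Lemma setU1D1 (T : finType) (a b : T) (A : {set T}) : a != b ->
  (a |: A) :\ b = a |: (A :\ b).
Proof.
move=> ab; apply/setP => x; rewrite !inE; case: (x =P a) => [->|_] /=.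
  by rewrite ab.
by [].
Qed.

Lemma pm_pathR F m : forall (p : seq (vtx n d)) (u w : 'I_d), size p <= m ->
  path (adj F) (inr u) p -> uniq (inr u :: p) -> last (inr u) p = inr w ->
  exists I J M1 M2, [/\ M1 \subset F, M2 \subset F, is_pm M1 I (J :\ u),
     is_pm M2 I (J :\ w) &
     [/\ u \in J, w \in J, forall v, v \in I -> inl v \in inr u :: p &
         forall v, v \in J -> inr v \in inr u :: p]].
Proof.
elim: m => [|m IH] [|z p] u w //=.
- move=> _ _ _ [<-]; exists set0, [set u], set0, set0; rewrite setDv.
  split; [exact: sub0set | exact: sub0set | exact: pm0 | exact: pm0 |].
  by split; rewrite ?inE ?eqxx // => v; rewrite !inE // => /eqP ->.
- move=> _ _ _ [<-]; exists set0, [set u], set0, set0; rewrite setDv.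
  split; [exact: sub0set | exact: sub0set | exact: pm0 | exact: pm0 |].
  by split; rewrite ?inE ?eqxx // => v; rewrite !inE // => /eqP ->.
case: z => [i1|b] //; case: p => [|[a|j1] p] //=; first by rewrite andbF.
move=> sz /andP [ui1 /andP [i1j1 pth]].
move=> /andP [un1 /andP [un2 un3]] lst.
have [I [J [M1 [M2 [M1F M2F pm1 pm2 [j1J wJ IC JC]]]]]] :=
  IH p j1 w (ltnW sz) pth un3 lst.
have i1I : i1 \notin I.
  by apply/negP => /IC h; rewrite h in un2.
have uJ : u \notin J.
  by apply/negP => /JC h; move: un1; rewrite inE h orbT.
have uw : u != w by apply: contraNneq uJ => ->.
exists (i1 |: I), (u |: J), ((i1, j1) |: M1), ((i1, u) |: M2); split.
- by rewrite subUset sub1set i1j1 M1F.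
- by rewrite subUset sub1set ui1 M2F.
- rewrite setU1K //; rewrite -(setD1K j1J); apply: pm_add => //.
  by rewrite !inE eqxx.
- rewrite setU1D1 //; apply: pm_add => //; by rewrite !inE negb_and uJ orbT.
- split.
  + by rewrite !inE eqxx.
  + by rewrite !inE wJ orbT.
  + move=> v; rewrite in_setU1 => /orP [/eqP ->|/IC]; first by rewrite !inE eqxx orbT.
    by move=> h; rewrite 2!in_cons h !orbT.
  + move=> v; rewrite in_setU1 => /orP [/eqP ->|/JC]; first by rewrite !inE eqxx.
    by move=> h; rewrite 2!in_cons h !orbT.
Qed.

Lemma pm_pathL F m : forall (p : seq (vtx n d)) (u w : 'I_n), size p <= m ->
  path (adj F) (inl u) p -> uniq (inl u :: p) -> last (inl u) p = inl w ->
  exists I J M1 M2, [/\ M1 \subset F, M2 \subset F, is_pm M1 (I :\ u) J,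
     is_pm M2 (I :\ w) J &
     [/\ u \in I, w \in I, forall v, v \in I -> inl v \in inl u :: p &
         forall v, v \in J -> inr v \in inl u :: p]].
Proof.
elim: m => [|m IH] [|z p] u w //=.
- move=> _ _ _ [<-]; exists [set u], set0, set0, set0; rewrite setDv.
  split; [exact: sub0set | exact: sub0set | exact: pm0 | exact: pm0 |].
  by split; rewrite ?inE ?eqxx // => v; rewrite !inE // => /eqP ->.
- move=> _ _ _ [<-]; exists [set u], set0, set0, set0; rewrite setDv.
  split; [exact: sub0set | exact: sub0set | exact: pm0 | exact: pm0 |].
  by split; rewrite ?inE ?eqxx // => v; rewrite !inE // => /eqP ->.
case: z => [b|j1] //; case: p => [|[i1|a] p] //=; last by rewrite andbF.
move=> sz /andP [uj1 /andP [i1j1 pth]].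
move=> /andP [un1 /andP [un2 un3]] lst.
have [I [J [M1 [M2 [M1F M2F pm1 pm2 [i1I wI IC JC]]]]]] :=
  IH p i1 w (ltnW sz) pth un3 lst.
have j1J : j1 \notin J.
  by apply/negP => /JC h; rewrite h in un2.
have uI : u \notin I.
  by apply/negP => /IC h; move: un1; rewrite inE h orbT.
have uw : u != w by apply: contraNneq uI => ->.
exists (u |: I), (j1 |: J), ((i1, j1) |: M1), ((u, j1) |: M2); split.
- by rewrite subUset sub1set i1j1 M1F.
- by rewrite subUset sub1set uj1 M2F.
- rewrite setU1K //; rewrite -(setD1K i1I); apply: pm_add => //.
  by rewrite !inE eqxx.
- rewrite setU1D1 //; apply: pm_add => //; by rewrite !inE negb_and uI orbT.
- split.
  + by rewrite !inE eqxx.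
  + by rewrite !inE wI orbT.
  + move=> v; rewrite in_setU1 => /orP [/eqP ->|/IC]; first by rewrite !inE eqxx.
    by move=> h; rewrite 2!in_cons h !orbT.
  + move=> v; rewrite in_setU1 => /orP [/eqP ->|/JC]; first by rewrite !inE eqxx orbT.
    by move=> h; rewrite 2!in_cons h !orbT.
Qed.

End PM.

Section Exch.
Variables n d : nat.
Implicit Types (G H A B F M : {set edge n d}).

Lemma setU1UD (T : finType) (a : T) (A B : {set T}) : a \in B ->
  a |: (A :|: (B :\ a)) = A :|: B.
Proof.
move=> aB; apply/setP => v; rewrite !inE; case: (v =P a) => [->|_] /=.
  by rewrite aB orbT.
by [].
Qed.

Lemma setU1DU (T : finType) (a : T) (A B : {set T}) : a \in A ->
  a |: ((A :\ a) :|: B) = A :|: B.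
Proof.
move=> aA; apply/setP => v; rewrite !inE; case: (v =P a) => [->|_] /=.
  by rewrite aA.
by [].
Qed.

Lemma exch A B F (x y : edge n d) : compatible A B -> F \subset A -> F \subset B ->
  x \in A -> y \in B -> x \notin B ->
  ~~ connect (adj F) (inl x.1) (inr x.2) ->
  ~~ connect (adj F) (inl y.1) (inr y.2) ->
  (forall w, connect (adj F) w (inl x.1) \/ connect (adj F) w (inr x.2)) ->
  ~~ connect (adj F) (inr x.2) (inr y.2).
Proof.
case: x => xa xb; case: y => ya yb /=.
move=> cAB FA FB xA yB xB Sx Sy Tx; apply/negP => cR.
have cL : connect (adj F) (inl xa) (inl ya).
  case: (Tx (inl ya)) => h; first by rewrite cC.
  by case/negP: Sy; apply: connect_trans h cR.
have sep : forall v, connect (adj F) (inr xb) v -> connect (adj F) (inl xa) v -> False.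
  move=> v h1 h2; case/negP: Sx; apply: connect_trans h2 _; by rewrite cC.
move: cR => /connectP [p0 pth0 lst0]; case: (shortenP pth0) lst0 => p pth un _ lst.
have [I [J [M1 [M2 [M1F M2F pm1 pm2 [xbJ ybJ IC JC]]]]]] :=
  pm_pathR (leqnn _) pth un (esym lst).
have IC' : forall v, v \in I -> connect (adj F) (inr xb) (inl v).
  by move=> v h; apply: (path_connect pth); apply: IC.
have JC' : forall v, v \in J -> connect (adj F) (inr xb) (inr v).
  by move=> v h; apply: (path_connect pth); apply: JC.
move: cL => /connectP [q0 qth0 lstq0]; case: (shortenP qth0) lstq0 => q qth unq _ lstq.
have [I' [J' [N1 [N2 [N1F N2F pmN1 pmN2 [xaI' yaI' IC2 JC2]]]]]] :=
  pm_pathL (leqnn _) qth unq (esym lstq).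
have IC2' : forall v, v \in I' -> connect (adj F) (inl xa) (inl v).
  by move=> v h; apply: (path_connect qth); apply: IC2.
have JC2' : forall v, v \in J' -> connect (adj F) (inl xa) (inr v).
  by move=> v h; apply: (path_connect qth); apply: JC2.
have pmA : is_pm ((xa, xb) |: (M1 :|: N1)) (xa |: (I :|: (I' :\ xa)))
                 (xb |: ((J :\ xb) :|: J')).
  apply: pm_add; first apply: pm_union pm1 pmN1 _ _.
  - move=> v vI; rewrite inE => /andP [_ vI']; exact: sep _ (IC' v vI) (IC2' v vI').
  - move=> v; rewrite inE => /andP [_ vJ] vJ'; exact: sep _ (JC' v vJ) (JC2' v vJ').
  - rewrite in_setU in_setD1 eqxx /= orbF; apply/negP => h.
    exact: sep _ (IC' _ h) (connect0 _ _).
  - rewrite in_setU in_setD1 eqxx /=; apply/negP => h.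
    exact: sep _ (connect0 _ _) (JC2' _ h).
have pmB : is_pm ((ya, yb) |: (M2 :|: N2)) (ya |: (I :|: (I' :\ ya)))
                 (yb |: ((J :\ yb) :|: J')).
  apply: pm_add; first apply: pm_union pm2 pmN2 _ _.
  - move=> v vI; rewrite inE => /andP [_ vI']; exact: sep _ (IC' v vI) (IC2' v vI').
  - move=> v; rewrite inE => /andP [_ vJ] vJ'; exact: sep _ (JC' v vJ) (JC2' v vJ').
  - rewrite in_setU in_setD1 eqxx /= orbF; apply/negP => h.
    exact: sep _ (IC' _ h) (IC2' _ yaI').
  - rewrite in_setU in_setD1 eqxx /=; apply/negP => h.
    exact: sep _ (JC' _ ybJ) (JC2' _ h).
rewrite setU1UD // setU1DU // in pmA.
rewrite setU1UD // setU1DU // in pmB.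
have subA : (xa, xb) |: (M1 :|: N1) \subset A.
  by rewrite subUset sub1set xA subUset (subset_trans M1F FA) (subset_trans N1F FA).
have subB : (ya, yb) |: (M2 :|: N2) \subset B.
  by rewrite subUset sub1set yB subUset (subset_trans M2F FB) (subset_trans N2F FB).
have eqM := cAB _ _ _ _ subA subB pmA pmB.
have : (xa, xb) \in (ya, yb) |: (M2 :|: N2) by rewrite -eqM setU11.
by move/(subsetP subB); rewrite (negbTE xB).
Qed.

End Exch.

Lemma subD1D1l (T : finType) (A : {set T}) a b : A :\ a :\ b \subset A :\ a.
Proof. by apply/subsetP => z; rewrite !inE => /and3P [_ ->]. Qed.
Lemma subD1D1r (T : finType) (A : {set T}) a b : A :\ a :\ b \subset A :\ b.
Proof. by apply/subsetP => z; rewrite !inE => /and3P [-> _ ->]. Qed.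
Lemma D1decomp (T : finType) (A : {set T}) a b : b \in A -> b != a ->
  A :\ a = b |: (A :\ a :\ b).
Proof. by move=> bA ba; rewrite setD1K // !inE ba. Qed.

Section Chain.
Variables (n d : nat) (Tr : nat -> {set edge n d}) (x y : nat -> edge n d) (l : nat)
  (jj : nat -> 'I_d).
Hypothesis htree : forall k, k <= l -> spanning_tree (Tr k).
Hypothesis hcomp : forall k k', k <= l -> k' <= l -> compatible (Tr k) (Tr k').
Hypothesis hD1 : forall k, k < l -> Tr k :\: Tr k.+1 = [set x k].
Hypothesis hD2 : forall k, k < l -> Tr k.+1 :\: Tr k = [set y k.+1].
Hypothesis hx : forall k, (x k).2 = jj k.
Hypothesis hy : forall k, (y k).2 = jj k.
Hypothesis hinj : forall k k', k <= l -> k' <= l -> jj k = jj k' -> k = k'.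

Local Notation F k := (Tr k :\ x k).
Local Notation cn G u v := (connect (adj G) u v).

Lemma xin k : k < l -> x k \in Tr k.
Proof. by move=> kl; have := set11 (x k); rewrite -hD1 // inE => /andP []. Qed.
Lemma xout k : k < l -> x k \notin Tr k.+1.
Proof. by move=> kl; have := set11 (x k); rewrite -hD1 // inE => /andP []. Qed.
Lemma yin k : k < l -> y k.+1 \in Tr k.+1.
Proof. by move=> kl; have := set11 (y k.+1); rewrite -hD2 // inE => /andP []. Qed.
Lemma yout k : k < l -> y k.+1 \notin Tr k.
Proof. by move=> kl; have := set11 (y k.+1); rewrite -hD2 // inE => /andP []. Qed.

Lemma Fe k : k < l -> F k = Tr k.+1 :\ y k.+1.
Proof.
move=> kl; apply/setP => e; rewrite !inE.
have h1 : (e \in Tr k :\: Tr k.+1) = (e \in [set x k]) by rewrite hD1.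
have h2 : (e \in Tr k.+1 :\: Tr k) = (e \in [set y k.+1]) by rewrite hD2.
rewrite !inE in h1 h2.
by move: h1 h2; case: (e \in Tr k); case: (e \in Tr k.+1) => /= <- <-.
Qed.

Lemma S1 k : k < l -> ~~ cn (F k) (inl (x k).1) (inr (jj k)).
Proof.
move=> kl; rewrite -(hx k); move: (xin kl); case: (x k) => a b /= h.
exact: tree_sep (htree (ltnW kl)).2 h.
Qed.

Lemma S2 k : k < l -> ~~ cn (F k) (inl (y k.+1).1) (inr (jj k.+1)).
Proof.
move=> kl; rewrite Fe // -(hy k.+1); move: (yin kl); case: (y k.+1) => a b /= h.
exact: tree_sep (htree kl).2 h.
Qed.

Lemma T1 k w : k < l -> cn (F k) w (inl (x k).1) \/ cn (F k) w (inr (jj k)).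
Proof. by move=> kl; rewrite -(hx k); apply: tree_two (htree (ltnW kl)).1 (xin kl). Qed.

Lemma T2 k w : k < l -> cn (F k) w (inl (y k.+1).1) \/ cn (F k) w (inr (jj k.+1)).
Proof. by move=> kl; rewrite Fe // -(hy k.+1); apply: tree_two (htree kl).1 (yin kl). Qed.

Lemma Lk k : k < l -> ~~ cn (F k) (inr (jj k)) (inr (jj k.+1)).
Proof.
move=> kl; rewrite -(hx k) -(hy k.+1); apply: (exch (A := Tr k) (B := Tr k.+1)).
- exact: hcomp (ltnW kl) kl.
- exact: subD1set.
- by rewrite Fe // subD1set.
- exact: xin.
- exact: yin.
- exact: xout.
- rewrite hx; exact: S1.
- rewrite hy; exact: S2.
- by move=> w; rewrite hx; apply: T1.
Qed.

Lemma jjk k : k < l -> cn (F k) (inr (jj k.+1)) (inl (x k).1).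
Proof. by move=> kl; case: (T1 (inr (jj k.+1)) kl) => // h; move: (Lk kl); rewrite cC h. Qed.

Lemma jjk' k : k < l -> cn (F k) (inr (jj k)) (inl (y k.+1).1).
Proof. by move=> kl; case: (T2 (inr (jj k)) kl) => // h; move: (Lk kl); rewrite h. Qed.


Lemma Bdiag k : k.+1 < l -> y k.+1 != x k.+1.
Proof.
move=> kl; apply/negP => /eqP e; have kl' : k < l by apply: ltnW.
have FF : F k = F k.+1 by rewrite Fe // e.
have xk2 : x k \notin Tr k.+2.
  apply/negP => h.
  have xy : x k != y k.+2.
    apply/negP => /eqP xy; have := hx k; rewrite xy hy => /hinj; lia.
  have : x k \in F k.+1.
  by rewrite Fe // !inE xy h.
  by rewrite -FF !inE eqxx.
have H : ~~ cn (F k) (inr (x k).2) (inr (y k.+2).2).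
  apply: (exch (A := Tr k) (B := Tr k.+2)).
  - exact: hcomp (ltnW kl') kl.
  - exact: subD1set.
  - by rewrite FF Fe // subD1set.
  - exact: xin.
  - exact: yin.
  - exact: xk2.
  - rewrite hx; exact: S1.
  - rewrite FF hy; exact: S2.
  - by move=> w; rewrite hx; apply: T1.
case/negP: H; rewrite hx hy.
apply: connect_trans (jjk' kl') _.
rewrite e cC FF; exact: jjk.
Qed.

Lemma Fw m : forall k, k + m < l -> cn (F k) (inr (jj (k + m).+1)) (inl (x k).1).
Proof.
elim: m => [|m IH] k h; first by rewrite addn0 in h *; exact: jjk.
have kl : k < l by lia.
have k1l : k.+1 < l by lia.
have := IH k.+1; rewrite addSnnS => /(_ h).
rewrite (D1decomp (b := y k.+1) (yin kl)) ?Bdiag // => /cut [c|[c1 c2]|[c1 c2]].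
- apply: connect_trans (cmono _ c) _; first by rewrite Fe // subD1D1r.
  apply: connect_trans (jjk kl); rewrite -hx.
  move: (xin k1l) (Bdiag k1l); case: (x k.+1) => a b xa yx.
  by apply: cedge; rewrite Fe // !inE /= eq_sym yx xa.
- move: (S1 k1l); rewrite cC -(hy k.+1); move: (cmono (subD1D1l _ _ _) c2) => ->.
  by [].
- apply: connect_trans (cmono _ c1) _; first by rewrite Fe // subD1D1r.
  rewrite hy; exact: jjk.
Qed.

Lemma Bw m : forall k, m <= k -> k < l -> cn (F k) (inr (jj (k - m))) (inl (y k.+1).1).
Proof.
elim: m => [|m IH] k h kl; first by rewrite subn0; exact: jjk'.
case: k h kl => [|k] // h kl; rewrite subSS.
have kl' : k < l by lia.
have := IH k h kl'; rewrite Fe //.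
rewrite (D1decomp (b := x k.+1) (xin kl)) 1?eq_sym ?Bdiag // => /cut [c|[c1 c2]|[c1 c2]].
- apply: connect_trans (cmono _ c) _; first by rewrite subD1D1r.
  apply: connect_trans (jjk' kl); rewrite -hy.
  move: (yin kl') (Bdiag kl); case: (y k.+1) => a b ya yx.
  by apply: cedge; rewrite !inE /= yx ya.
- move: (S2 kl'); rewrite cC -(hx k.+1) Fe //; move: (cmono (subD1D1l _ _ _) c2) => ->.
  by [].
- apply: connect_trans (cmono _ c1) _; first by rewrite subD1D1r.
  rewrite hx; exact: jjk'.
Qed.

Lemma partA k a b : k < l -> a <= k -> k < b -> b <= l ->
  ~~ cn (F k) (inr (jj a)) (inr (jj b)).
Proof.
move=> kl ak kb bl; apply/negP => h.
have h1 := Bw (m := k - a) (leq_subr _ _) kl; rewrite subKn // in h1.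
have h2 := Fw (m := b - k.+1) (k := k) ltac:(lia).
rewrite (_ : (k + (b - k.+1)).+1 = b) in h2; last by lia.
case/negP: (S2 kl); rewrite cC in h1; apply: connect_trans h1 _.
apply: connect_trans h _; apply: connect_trans h2 _; rewrite cC; exact: jjk.
Qed.

Lemma partB k k' : 1 <= k -> k <= k' -> k' < l -> (y k).1 != (x k').1.
Proof.
have P : forall m c, c + m < l ->
    cn (F (c + m)) (inl (y c.+1).1) (inr (jj (c + m))).
  elim=> [|m IH] c h.
    rewrite addn0 cC; have := Bw (m := 0) (k := c) (leq0n _); rewrite subn0 addn0 in h *.
    by apply.
  have pl : c + m < l by lia.
  rewrite addnS in h *.
  have b0 := Bw (m := 0) (leq0n _) pl; rewrite subn0 in b0.
  have := connect_trans (IH c pl) b0; rewrite Fe //.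
  rewrite (D1decomp (b := x (c + m).+1) (xin h)) 1?eq_sym ?Bdiag //.
  move=> /cut [c0|[c1 c2]|[c1 c2]].
  - apply: connect_trans (cmono _ c0) _; first by rewrite subD1D1r.
    rewrite -hy; move: (yin pl) (Bdiag h); case: (y (c + m).+1) => a b ya yx.
    by apply: cedge; rewrite !inE /= yx ya.
  - move: (S2 pl); rewrite cC -(hx (c + m).+1) Fe //.
    by move: (cmono (subD1D1l _ _ _) c2) => ->.
  - apply: connect_trans (cmono _ c1) _; first by rewrite subD1D1r.
    by rewrite hx.
case: k => [|c] // _ kk' k'l; apply/negP => /eqP e.
have := P (k' - c) c; rewrite (_ : c + (k' - c) = k'); last by lia.
move=> /(_ k'l); rewrite e => h; case/negP: (S1 k'l); exact: h.
Qed.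

Lemma partC (g : edge n d) k : g.2 = jj k -> k <= l -> (forall m, m <= l -> g \in Tr m) ->
  (forall k', k <= k' -> k' < l -> (x k').1 != g.1) /\
  (forall k', 1 <= k' -> k' <= k -> (y k').1 != g.1).
Proof.
move=> g2 kl gT; split.
- move=> k' kk' k'l; apply/negP => /eqP e.
  have gF : g \in F k'.
    rewrite !inE (gT k' (ltnW k'l)) andbT; apply/negP => /eqP gx.
    by move: (xout k'l); rewrite -gx gT.
  have c1 : cn (F k') (inl g.1) (inr (jj k)) by rewrite -g2; case: g gF {g2 gT e} => a b; exact: cedge.
  have h1 := Bw (m := k' - k) (leq_subr _ _) k'l; rewrite subKn // in h1.
  have h2 := Bw (m := 0) (leq0n _) k'l; rewrite subn0 in h2.
  case/negP: (S1 k'l); rewrite e; apply: connect_trans c1 _.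
  apply: connect_trans h1 _; by rewrite cC.
- move=> [|c] // _ ck; apply/negP => /eqP e.
  have cl : c < l by lia.
  have gF : g \in F c.
    rewrite Fe // !inE (gT c.+1) // andbT; apply/negP => /eqP gx.
    by move: (yout cl); rewrite -gx gT // ltnW // (leq_trans ck kl).
  have c1 : cn (F c) (inl g.1) (inr (jj k)) by rewrite -g2; case: g gF {g2 gT e} => a b; exact: cedge.
  have h1 := Fw (m := k - c.+1) (k := c) ltac:(lia).
  rewrite (_ : (c + (k - c.+1)).+1 = k) in h1; last by lia.
  have h2 := Fw (m := 0) (k := c) ltac:(lia); rewrite addn0 in h2.
  case/negP: (S2 cl); rewrite e; apply: connect_trans c1 _.
  apply: connect_trans h1 _; by rewrite cC.
Qed.

End Chain.
Unset Implicit Arguments.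

Theorem mainTheorem15 (n d : nat) (GG : {set {set edge n d}})
  (T : {ffun 'I_d -> nat} -> {set edge n d})
  (t : {ffun 'I_d -> nat}) (l : nat)
  (j : nat -> 'I_d) (i i' : nat -> 'I_n) :
  0 < d -> 2 <= n ->
  encodes_fine_mixed_subdivision GG ->
  (* T u is the tree of GG with right degree vector u + 1 *)
  (forall u, lattice_pt (n - 1) u -> T u \in GG /\ RD (T u) = addv u (all_ones d)) ->
  lattice_pt (n - 2) t ->
  1 <= l ->
  (* j_0, ..., j_l is a path (distinct vertices) in G(t) with near labels *)
  (forall k k', k <= l -> k' <= l -> j k = j k' -> k = k') ->
  (forall k, k < l -> linkage_edge T t (j k) (j k.+1) (i k) (i' k.+1)) ->
  (* (a) *)
  (forall k, k < l -> forall a b, a <= k -> k < b -> b <= l ->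
     ~~ connect (adj (T (addv t (unitv (j k))) :\ (i k, j k))) (inr (j a)) (inr (j b))) /\
  (* (b) *)
  (forall k k', 1 <= k -> k <= k' -> k' < l -> i' k != i k') /\
  (* (c) *)
  (forall (i0 : 'I_n) k, k <= l -> (i0, j k) \in Tt T t ->
     (forall k', k <= k' -> k' < l -> i k' != i0) /\
     (forall k', 1 <= k' -> k' <= k -> i' k' != i0)).
Proof.
move=> d0 n2 [encT [_ encC]] hT ht l1 hinj hlink.
have lat : forall j0, lattice_pt (n - 1) (addv t (unitv j0)).
  move=> j0; rewrite /lattice_pt.
  rewrite (eq_bigr (fun k => t k + (k == j0 : nat))); last by move=> k _; rewrite !ffunE.
  rewrite big_split /= ht (bigD1 j0) //= eqxx big1 ?addn0; last by move=> k /negbTE ->.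
  lia.
pose Tr k := T (addv t (unitv (j k))).
have inGG : forall k, Tr k \in GG by move=> k; exact: (hT _ (lat (j k))).1.
have htree : forall k, k <= l -> spanning_tree (Tr k) by move=> k _; exact: encT.
have hcomp : forall k k', k <= l -> k' <= l -> compatible (Tr k) (Tr k').
  by move=> k k' _ _; apply: encC.
have hD1 : forall k, k < l -> Tr k :\: Tr k.+1 = [set (fun k => (i k, j k)) k].
  by move=> k kl; case: (hlink k kl).
have hD2 : forall k, k < l -> Tr k.+1 :\: Tr k = [set (fun k => (i' k, j k)) k.+1].
  by move=> k kl; case: (hlink k kl).
have hx : forall k, ((fun k => (i k, j k)) k).2 = j k by [].
have hy : forall k, ((fun k => (i' k, j k)) k).2 = j k by [].
split; [|split].
- move=> k kl a b ak kb bl.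
  exact: (partA htree hcomp hD1 hD2 hx hy hinj kl ak kb bl).
- move=> k k' k1 kk' k'l.
  exact: (partB htree hcomp hD1 hD2 hx hy hinj k1 kk' k'l).
- move=> i0 k kl hin.
  have gT : forall m, m <= l -> (i0, j k) \in Tr m.
    by move=> m _; move/bigcapP: hin => /(_ (j m) isT).
  exact: (partC htree hcomp hD1 hD2 hx hy hinj (g := (i0, j k)) (k := k) erefl kl gT).
Qed.
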